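(* Let $p$ be a probability density on $\mathbb{R}^d$ satisfying a log-Sobolev inequality with constant $C$, and let $q$ be a probability density with $\chi^2(q\|p)<\infty$. Let $\phi=q/p$ and $\psi=\phi/\mathbb{E}_p\phi^2$. Then $$\mathrm{KL}(\psi q\|p)\le\frac{2C}{\chi^2(q\|p)+1}\,\mathcal{E}_p\Big(\frac qp\Big).$$
   Context: Log-Sobolev inequality with constant $C$: $\mathrm{KL}(\mu\|p)\le\frac C2\mathbb{E}_\mu\|\nabla\ln(\mu/p)\|^2$ for all probability densities $\mu$. $\chi^2(q\|p)=\int q^2/p-1=\mathbb{E}_p\phi^2-1$; $\psi q$ is a probability density. Relative Fisher information: $\mathcal{E}_p(q/p):=\int\|\nabla(q/p)\|^2p\,dx$. *)

(* Defs.v *)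
From HB Require Import structures.
From mathcomp Require Import all_boot all_order all_algebra.
From mathcomp Require Import all_classical all_reals all_analysis.
Set Implicit Arguments. Unset Strict Implicit. Unset Printing Implicit Defensive.
Import Order.TTheory GRing.Theory Num.Theory.
Import numFieldNormedType.Exports.
Local Open Scope classical_set_scope.
Local Open Scope ring_scope.

(* R^d as row vectors 'rV[R]_d, equipped with its Borel sigma-algebra
   (the sigma-algebra generated by the open sets of its normed topology). *)
Definition Rd (R : realType) (d : nat) :=
  g_sigma_algebraType (@open 'rV[R]_d).

(* lam is Lebesgue measure on the Borel sets of R^d: the measure giving every
   half-open box ]a,b] its volume.  (This determines the measure uniquely.) *)
Definition is_lebesgue_Rd (R : realType) (d : nat)
  (lam : {measure set (Rd R d) -> \bar R}) : Prop :=
  forall a b : 'rV[R]_d, (forall i, a ord0 i <= b ord0 i) ->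
    lam [set x : Rd R d | forall i, a ord0 i < x ord0 i <= b ord0 i]
    = (\prod_(i < d) (b ord0 i - a ord0 i))%:E.

Definition is_density (R : realType) (d : nat)
  (lam : {measure set (Rd R d) -> \bar R}) (f : Rd R d -> R) : Prop :=
  [/\ measurable_fun setT f, (forall x, 0 <= f x) &
      (\int[lam]_x (f x)%:E = 1)%E].

Definition grad (R : realType) (d : nat) (f : 'rV[R]_d -> R) (x : 'rV[R]_d)
  : 'rV[R]_d :=
  \row_(i < d) ('D_(delta_mx ord0 i) f x).

Definition sqnorm (R : realType) (d : nat) (v : 'rV[R]_d) : R :=
  \sum_(i < d) (v ord0 i) ^+ 2.

(* KL(mu || p) = int mu ln (mu/p)   (with 0 ln 0 = 0, as ln 0 = 0 here) *)
Definition KL (R : realType) (d : nat) (lam : {measure set (Rd R d) -> \bar R})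
  (mu p : Rd R d -> R) : \bar R :=
  (\int[lam]_x (mu x * ln (mu x / p x))%:E)%E.

Definition chi2 (R : realType) (d : nat) (lam : {measure set (Rd R d) -> \bar R})
  (q p : Rd R d -> R) : \bar R :=
  (\int[lam]_x ((q x) ^+ 2 / p x)%:E - 1)%E.

Definition Ep_sq (R : realType) (d : nat) (lam : {measure set (Rd R d) -> \bar R})
  (p phi : Rd R d -> R) : \bar R :=
  (\int[lam]_x ((phi x) ^+ 2 * p x)%:E)%E.

Definition fisher (R : realType) (d : nat) (lam : {measure set (Rd R d) -> \bar R})
  (p : Rd R d -> R) (f : 'rV[R]_d -> R) : \bar R :=
  (\int[lam]_x (sqnorm (grad f x) * p x)%:E)%E.

Definition fisher_ln (R : realType) (d : nat) (lam : {measure set (Rd R d) -> \bar R})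
  (mu p : Rd R d -> R) : \bar R :=
  (\int[lam]_x (mu x * sqnorm (grad (fun y : 'rV[R]_d => ln (mu y / p y)) x))%:E)%E.

(* Log-Sobolev inequality with constant C, for all probability densities mu
   (regularity: mu/p differentiable everywhere, so that the gradient exists). *)
Definition LSI (R : realType) (d : nat) (lam : {measure set (Rd R d) -> \bar R})
  (p : Rd R d -> R) (C : R) : Prop :=
  forall mu : Rd R d -> R, is_density lam mu ->
    (forall x : 'rV[R]_d, differentiable (fun y : 'rV[R]_d => mu y / p y) x) ->
    (KL lam mu p <= (C / 2)%:E * fisher_ln lam mu p)%E.

(* Main.v *)
Require Import Defs.
From HB Require Import structures.
From mathcomp Require Import all_boot all_order all_algebra.
From mathcomp Require Import all_classical all_reals all_analysis.
From mathcomp Require Import ring lra.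
Import Order.TTheory GRing.Theory Num.Theory.
Import numFieldNormedType.Exports.
Local Open Scope classical_set_scope.
Local Open Scope ring_scope.
Import HBNNSimple.

Lemma int_scale_le d (T : measurableType d) (R : realType)
  (mu : {measure set T -> \bar R}) (f : T -> \bar R) (k : R) :
  0 < k -> (forall x, (0 <= f x)%E) ->
  (\int[mu]_x (k%:E * f x) <= k%:E * \int[mu]_x f x)%E.
Proof.
move=> k0 f0.
rewrite ge0_integralTE; last by move=> x; rewrite mule_ge0 // lee_fin ltW.
rewrite ge0_integralTE //.
apply: ge_ereal_sup => _ [h /= hle <-].
have ki0 : 0 <= k^-1 by rewrite invr_ge0 ltW.
pose h' := scale_nnsfun h ki0.
have e : sintegral mu h' = ((k^-1)%:E * sintegral mu h)%E.
  exact: sintegralrM.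
have -> : sintegral mu h = (k%:E * sintegral mu h')%E.
  by rewrite e muleA -EFinM divff ?gt_eqF // mul1e.
rewrite lee_pmul2l ?lte_fin //; last first.
apply: ereal_sup_ubound; exists h' => //= x.
rewrite /h' /= mulrC.
move: (hle x) (f0 x); case: (f x) => [r| |] //=.
- by rewrite -EFinM !lee_fin ler_pdivrMr // mulrC.
- by move=> _ _; rewrite leey.
Qed.

Lemma int_scale d (T : measurableType d) (R : realType)
  (mu : {measure set T -> \bar R}) (f : T -> \bar R) (k : R) :
  0 < k -> (forall x, (0 <= f x)%E) ->
  (\int[mu]_x (k%:E * f x) = k%:E * \int[mu]_x f x)%E.
Proof.
move=> k0 f0; apply/eqP; rewrite eq_le int_scale_le //=.
have ki0 : 0 < k^-1 by rewrite invr_gt0.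
have kf0 : forall x, (0 <= k%:E * f x)%E by move=> x; rewrite mule_ge0 // lee_fin ltW.
have := @int_scale_le _ _ _ mu _ _ ki0 kf0.
under eq_integral do rewrite muleA -EFinM mulVf ?gt_eqF // mul1e.
move=> H; rewrite -(@lee_pmul2l _ (k^-1)%:E) ?in_itv /= ?andbT ?lte_fin ?ltry //.
by rewrite muleA -EFinM mulVf ?gt_eqF // mul1e.
Qed.

Lemma derive_line (R : realType) n (F : 'rV[R]_n -> R) x v :
  'D_v F x = 'D_1 (fun h : R => F (h *: v + x)) 0.
Proof.
rewrite /derive; set g1 := fun h => h^-1 *: _; set g2 := fun h => h^-1 *: _.
suff -> : g1 = g2 by [].
by rewrite funeqE /g1 /g2 => h /=; rewrite addr0 scale0r add0r [_%:A]mulr1.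
Qed.

Lemma line_derivable (R : realType) n (F : 'rV[R]_n -> R) x v t :
  (forall y, differentiable F y) -> derivable (fun h : R => F (h *: v + x)) t 1.
Proof.
move=> dF; apply/derivable1_diffP.
apply: (@differentiable_comp _ _ _ _ (fun h : R => h *: v + x) F); last exact: dF.
by apply: differentiableD.
Qed.

Lemma derive_min (R : realType) n (F : 'rV[R]_n -> R) x v :
  (forall y, differentiable F y) -> (forall y, F x <= F y) -> 'D_v F x = 0.
Proof.
move=> dF Fmin; rewrite derive_line.
have h := @derive1_at_min R (fun h : R => F (h *: v + x)) (-1) 1 0.
suff [_ ->] : is_derive (0:R) 1 (fun h : R => F (h *: v + x)) 0 by [].
apply: h.
- lra.
- by move=> t _; exact: line_derivable.
- by rewrite in_itv /= ltrN10 ltr01.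
- by move=> t _; rewrite scale0r add0r.
Qed.

Lemma derive_lnsq (R : realType) n (F : 'rV[R]_n -> R) x v (s : R) :
  (forall y, differentiable F y) -> 0 < F x -> 0 < s ->
  'D_v (fun y => ln (F y ^+ 2 / s)) x = 2 * 'D_v F x / F x.
Proof.
move=> dF Fx s0; rewrite derive_line [in RHS]derive_line.
set k := fun h : R => F (h *: v + x).
have k0 : k 0 = F x by rewrite /k scale0r add0r.
have dk : forall t, derivable k t 1 by move=> t; exact: line_derivable.
rewrite -derive1E.
change (derive1 (@ln R \o (fun h => k h * k h * s^-1)) 0 = 2 * 'D_1 k 0 / F x).
have dkk : derivable (fun h => k h * k h * s^-1) 0 1.
  apply: derivableM; first exact: derivableM.
  exact: derivable_cst.
have pos : 0 < k 0 * k 0 * s^-1 by rewrite k0 !mulr_gt0 // invr_gt0.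
rewrite derive1_comp //; last first.
  by apply: ex_derive; exact: is_derive1_ln.
rewrite derive1E; have [_ ->] := is_derive1_ln pos.
rewrite (derive1Mr (f := fun h => k h * k h)); last exact: derivableM.
rewrite derive1E.
change ('D_1 (k * k) 0) with ('D_1 (k * k) 0).
rewrite deriveM // k0.
rewrite /GRing.scale /=.
field.
by rewrite !gt_eqF.
Qed.

Theorem lemma8 (R : realType) (d : nat) (lam : {measure set (Rd R d) -> \bar R})
  (p q : Rd R d -> R) (C : R) :
  is_lebesgue_Rd lam ->
  is_density lam p -> (forall x, 0 < p x) ->
  0 < C -> LSI lam p C ->
  is_density lam q ->
  (chi2 lam q p < +oo)%E ->
  (forall x : 'rV[R]_d, differentiable (fun y : 'rV[R]_d => q y / p y) x) ->
  let phi := fun x : Rd R d => q x / p x in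
  let psi := fun x : Rd R d => phi x / fine (Ep_sq lam p phi) in
  (KL lam (fun x => (psi x * q x)%R) p
    <= (2 * C / (fine (chi2 lam q p) + 1))%:E
       * fisher lam p (fun y : 'rV[R]_d => (q y / p y)%R))%E.
Proof.
move=> leb dp ppos C0 lsi dq chifin dphi; cbv zeta.
set phi := fun x : Rd R d => q x / p x.
case: dp => mp p0 p1; case: dq => mq q0 q1.
have pne0 x : p x != 0 by rewrite gt_eqF.
pose S := (\int[lam]_x ((q x ^+ 2 / p x)%:E))%E.
have S0 : (0 <= S)%E.
  by apply: integral_ge0 => x _; rewrite lee_fin divr_ge0 ?sqr_ge0 // ltW.
have chiE : chi2 lam q p = (S - 1)%E by [].
have [s Ss] : exists s, S = s%:E.
  move: S0 chifin; rewrite chiE; case: (S) => [r| |] //; by exists r.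
have s0 : 0 <= s by rewrite -lee_fin -Ss.
have hE : fine (Ep_sq lam p phi) = s.
  rewrite /Ep_sq -[s]/(fine s%:E) -Ss /S; congr fine.
  apply: eq_integral => x _; congr EFin; rewrite /phi; field; exact: pne0.
have hchi : fine (chi2 lam q p) + 1 = s by rewrite chiE Ss /= subrK.
rewrite hchi hE.
have [->|spos] := eqVneq s 0.
  rewrite invr0 mulr0 mul0e.
  rewrite /KL integral0_eq // => x _.
  by rewrite mulr0 !mul0r.
have spos' : 0 < s by rewrite lt_def spos s0.
pose mu := fun x : Rd R d => phi x / s * q x.
have mpinv : measurable_fun setT (fun x : Rd R d => (p x)^-1).
  change (measurable_fun setT ((@GRing.inv R) \o p)).
  apply: (@measurable_comp _ _ _ _ R _ (`]0, +oo[%classic : set R) (@GRing.inv R) setT p).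
  - exact: measurable_itv.
  - by move=> _ [x _ <-]; rewrite /= in_itv /= andbT.
  - apply: measurable_realfun.open_continuous_measurable_fun; first exact: rray_open.
    move=> x; rewrite inE /= in_itv /= andbT => x0.
    by apply: inv_continuous; rewrite gt_eqF.
  - exact: mp.
have mudens : is_density lam mu.
  split.
  - rewrite /mu /phi.
    apply: measurable_realfun.measurable_funM => //.
    apply: measurable_realfun.measurable_funM => //.
    exact: measurable_realfun.measurable_funM.
  - by move=> x; rewrite /mu /phi mulr_ge0 // ?divr_ge0 // ?ltW.
  - have -> : (\int[lam]_x (mu x)%:E = (s^-1)%:E * S)%E.
      rewrite /S -int_scale; last 2 first.
      + by rewrite invr_gt0.
      + by move=> x; rewrite lee_fin divr_ge0 ?sqr_ge0 // ltW.
      apply: eq_integral => x _; rewrite -EFinM; congr EFin.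
      rewrite /mu /phi; field; apply/andP; split => //; exact: pne0.
    by rewrite Ss -EFinM mulVf.
have mudiff : forall x : 'rV[R]_d, differentiable (fun y : 'rV[R]_d => mu y / p y) x.
  move=> x.
  have -> : (fun y : 'rV[R]_d => mu y / p y) =
      ((fun y : 'rV[R]_d => q y / p y) * (fun y : 'rV[R]_d => q y / p y)) * cst s^-1.
    apply/funext => y; rewrite /mu /phi /=.
    change (q y / p y / s * q y / p y = q y / p y * (q y / p y) * s^-1).
    field; apply/andP; split => //; exact: pne0.
  apply: (@differentiableM R _ _ (cst s^-1)); last exact: differentiable_cst.
  by apply: differentiableM; apply: dphi.
have H := lsi mu mudens mudiff.
apply: (le_trans H).
have Fl : (fisher_ln lam mu p <= (4 / s)%:E * fisher lam p phi)%E.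
  rewrite /fisher_ln /fisher -int_scale; last 2 first.
  + by rewrite divr_gt0.
  + move=> x; rewrite lee_fin mulr_ge0 // ?sumr_ge0 // => i _; exact: sqr_ge0.
  rewrite le_eqVlt; apply/orP; left; apply/eqP; apply: eq_integral => x _; rewrite -EFinM; congr EFin.
  have Lfun : (fun y : 'rV[R]_d => ln (mu y / p y)) =
      (fun y : 'rV[R]_d => ln ((q y / p y) ^+ 2 / s)).
    apply/funext => y; congr ln; rewrite /mu /phi.
    field; apply/andP; split => //; exact: pne0.
  rewrite Lfun /sqnorm mulr_suml mulr_sumr mulr_sumr.
  apply: eq_bigr => i _; rewrite !mxE.
  have [qx0|qxpos] := eqVneq (q x) 0.
    have -> : 'D_(delta_mx 0 i) phi x = 0.
      apply: derive_min => //.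
      move=> y; rewrite /phi qx0 mul0r divr_ge0 //; exact: ltW.
    rewrite /mu qx0; ring.
  have phipos : 0 < (fun y : 'rV[R]_d => q y / p y) x.
    by rewrite /= divr_gt0 // lt_def qxpos q0.
  rewrite (@derive_lnsq R d (fun y => q y / p y) x (delta_mx 0 i) s dphi phipos spos').
  rewrite /mu /phi /=.
  field; rewrite qxpos pne0 spos //.
apply: le_trans (lee_wpmul2l _ Fl) _.
  by rewrite lee_fin divr_ge0 // ltW.
rewrite muleA -EFinM.
have -> : C / 2 * (4 / s) = 2 * C / s by field; rewrite spos.
by [].
Qed.
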